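(* Let $\lambda>0$, $X\in\mathbb R^{\mathbf m\times\mathbf n}$, and define on $\mathbb R^{\mathbf m\times\mathbf r}\times\mathbb R^{\mathbf r\times\mathbf n}$ $$f(U,V)=\tfrac12\|X-UV\|_F^2+\tfrac{\lambda}{2}\|I_{\mathbf r}-VV^\top\|_F^2,$$ $$\varphi_1(U,V)=\tfrac12\|U\|_F^2,\qquad \varphi_2(U,V)=\tfrac{6\lambda}{4}\|V\|_F^4+\tfrac12\varepsilon(U)\|V\|_F^2,\quad \varepsilon(U)=\max\{\|U^\top U\|,2\lambda\},$$ where $\|\cdot\|$ denotes the spectral norm. Then: (1) for every fixed $V$, the function $f(\cdot,V)$ is $(L_1(V),l_1)$-relatively smooth with respect to $\varphi_1(\cdot,V)$ with $L_1(V)=\|VV^\top\|$ and $l_1=0$, i.e. for all $U,U'$: $0\le f(U,V)-f(U',V)-\langle\nabla_Uf(U',V),U-U'\rangle\le \|VV^\top\|\,D_{\varphi_1(\cdot,V)}(U,U')$; (2) for every fixed $U$, the function $f(U,\cdot)$ is $(L_2,l_2)$-relatively smooth with respect to $\varphi_2(U,\cdot)$ with $L_2=1$ and $l_2=1$, i.e. for all $V,V'$: $-D_{\varphi_2(U,\cdot)}(V,V')\le f(U,V)-f(U,V')-\langle\nabla_Vf(U,V'),V-V'\rangle\le D_{\varphi_2(U,\cdot)}(V,V')$.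
   Context: Inner products on matrix spaces are the Frobenius (trace) inner product. For a differentiable convex $\psi$, the Bregman divergence is $D_\psi(x,y)=\psi(x)-\psi(y)-\langle\nabla\psi(y),x-y\rangle$. A function $\phi$ is $(L,l)$-relatively smooth with respect to $\psi$ if for all $x,y$: $-lD_\psi(x,y)\le\phi(x)-\phi(y)-\langle\nabla\phi(y),x-y\rangle\le LD_\psi(x,y)$. *)

(* Defs.v *)
From HB Require Import structures.
From mathcomp Require Import all_boot all_order all_algebra.
From mathcomp Require Import all_classical all_reals all_analysis.
Set Implicit Arguments. Unset Strict Implicit. Unset Printing Implicit Defensive.
Import Order.TTheory GRing.Theory Num.Theory.
Import numFieldNormedType.Exports.
Local Open Scope classical_set_scope.
Local Open Scope ring_scope.

Section Defs.
Variable R : realType.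

Definition frob_inner (p q : nat) (A B : 'M[R]_(p, q)) : R :=
  \sum_(i < p) \sum_(j < q) A i j * B i j.

Definition frob2 (p q : nat) (A : 'M[R]_(p, q)) : R := frob_inner A A.

Definition vnorm2 (q : nat) (x : 'cV[R]_q) : R := Num.sqrt (frob2 x).

Definition specnorm (p q : nat) (A : 'M[R]_(p, q)) : R :=
  sup [set vnorm2 (A *m x) | x in [set x : 'cV[R]_q | vnorm2 x <= 1]].

(* Bregman divergence D_psi(x,y) = psi x - psi y - <grad psi(y), x - y>,
   where <grad psi(y), h> is the (Frechet) differential of psi at y applied to h *)
Definition bregman (p q : nat) (psi : 'M[R]_(p, q) -> R) (x y : 'M[R]_(p, q)) : R :=
  psi x - psi y - 'd psi y (x - y).

Definition rel_smooth (p q : nat) (phi psi : 'M[R]_(p, q) -> R) (L l : R) : Prop :=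
  forall x y : 'M[R]_(p, q),
    - l * bregman psi x y <= phi x - phi y - 'd phi y (x - y) <= L * bregman psi x y.

Definition fobj (m n r : nat) (lam : R) (X : 'M[R]_(m, n))
  (U : 'M[R]_(m, r)) (V : 'M[R]_(r, n)) : R :=
  2^-1 * frob2 (X - U *m V) + lam / 2 * frob2 (1%:M - V *m V^T).

Definition phi1 (m n r : nat) (U : 'M[R]_(m, r)) (V : 'M[R]_(r, n)) : R :=
  2^-1 * frob2 U.

Definition eps_of (m r : nat) (lam : R) (U : 'M[R]_(m, r)) : R :=
  Num.max (specnorm (U^T *m U)) (2 * lam).

Definition phi2 (m n r : nat) (lam : R) (U : 'M[R]_(m, r)) (V : 'M[R]_(r, n)) : R :=
  6 * lam / 4 * (frob2 V) ^+ 2 + 2^-1 * eps_of lam U * frob2 V.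

End Defs.

(* Main.v *)
Require Import Defs.
From HB Require Import structures.
From mathcomp Require Import all_boot all_order all_algebra.
From mathcomp Require Import all_classical all_reals all_analysis.
From mathcomp Require Import ring lra.
Import Order.TTheory GRing.Theory Num.Theory.
Import numFieldNormedType.Exports.
Local Open Scope classical_set_scope.
Local Open Scope ring_scope.
Set Implicit Arguments. Unset Strict Implicit.

Section S.
Variable R : realType.

Lemma quad_trick (a b c : R) : 0 <= c ->
  (forall t, 0 <= a - 2 * b * t + c * t ^+ 2) -> b ^+ 2 <= a * c.
Proof.
move=> c0 H.
have a0 : 0 <= a by have := H 0; rewrite mulr0 expr0n /= mulr0 subr0 addr0.
have [cp|cle] := ltrP 0 c.
  have := H (b / c).
  have -> : a - 2 * b * (b / c) + c * (b / c) ^+ 2 = (a * c - b ^+ 2) / c.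
    by field; rewrite gt_eqF.
  by move=> h; have := mulr_ge0 h (ltW cp); rewrite divfK ?gt_eqF // subr_ge0.
have c00 : c = 0 by apply/eqP; rewrite eq_le cle c0 /=.
subst c; rewrite mulr0.
have [->|bn0] := eqVneq b 0; first by rewrite expr0n.
have := H ((a + 1) / (2 * b)).
have -> : a - 2 * b * ((a + 1) / (2 * b)) + 0 * ((a + 1) / (2 * b)) ^+ 2 = -1.
  by field.
by rewrite oppr_ge0 ler10.
Qed.

Lemma cs_sum (I : finType) (a b : I -> R) :
  (\sum_i a i * b i) ^+ 2 <= (\sum_i a i ^+ 2) * (\sum_i b i ^+ 2).
Proof.
apply: quad_trick; first by apply: sumr_ge0 => i _; exact: sqr_ge0.
move=> t.
have -> : \sum_i a i ^+ 2 - 2 * (\sum_i a i * b i) * t + (\sum_i b i ^+ 2) * t ^+ 2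
  = \sum_i (a i - t * b i) ^+ 2.
  rewrite mulr_sumr !mulr_suml -sumrB -big_split; apply: eq_bigr => i _ /=; ring.
by apply: sumr_ge0 => i _; exact: sqr_ge0.
Qed.

Implicit Types (p q k : nat).

Lemma ipC p q (A B : 'M[R]_(p,q)) : frob_inner A B = frob_inner B A.
Proof. by apply: eq_bigr => i _; apply: eq_bigr => j _; rewrite mulrC. Qed.

Lemma ipDl p q (A B C : 'M[R]_(p,q)) :
  frob_inner (A + B) C = frob_inner A C + frob_inner B C.
Proof.
rewrite /frob_inner -big_split; apply: eq_bigr => i _.
by rewrite -big_split; apply: eq_bigr => j _ /=; rewrite mxE mulrDl.
Qed.

Lemma ipZl p q (k : R) (A B : 'M[R]_(p,q)) :
  frob_inner (k *: A) B = k * frob_inner A B.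
Proof.
rewrite /frob_inner mulr_sumr; apply: eq_bigr => i _.
by rewrite mulr_sumr; apply: eq_bigr => j _ /=; rewrite mxE mulrA.
Qed.

Lemma ipNl p q (A B : 'M[R]_(p,q)) : frob_inner (- A) B = - frob_inner A B.
Proof. by rewrite -scaleN1r ipZl mulN1r. Qed.

Lemma ipDr p q (A B C : 'M[R]_(p,q)) :
  frob_inner C (A + B) = frob_inner C A + frob_inner C B.
Proof. by rewrite ipC ipDl ![frob_inner _ C]ipC. Qed.

Lemma ipZr p q (k : R) (A B : 'M[R]_(p,q)) :
  frob_inner B (k *: A) = k * frob_inner B A.
Proof. by rewrite ipC ipZl ipC. Qed.

Lemma ipNr p q (A B : 'M[R]_(p,q)) : frob_inner B (- A) = - frob_inner B A.
Proof. by rewrite ipC ipNl ipC. Qed.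

Lemma ipBl p q (A B C : 'M[R]_(p,q)) :
  frob_inner (A - B) C = frob_inner A C - frob_inner B C.
Proof. by rewrite ipDl ipNl. Qed.

Lemma ipBr p q (A B C : 'M[R]_(p,q)) :
  frob_inner C (A - B) = frob_inner C A - frob_inner C B.
Proof. by rewrite ipDr ipNr. Qed.

Lemma ip_tr p q (A B : 'M[R]_(p,q)) : frob_inner A^T B^T = frob_inner A B.
Proof.
rewrite /frob_inner exchange_big; apply: eq_bigr => i _.
by apply: eq_bigr => j _; rewrite !mxE.
Qed.

Lemma ip_mull p k q (A : 'M[R]_(p,k)) (C : 'M[R]_(k,q)) (B : 'M[R]_(p,q)) :
  frob_inner (A *m C) B = frob_inner C (A^T *m B).
Proof.
rewrite /frob_inner.
transitivity (\sum_(i < p) \sum_(j < q) \sum_(l < k) A i l * C l j * B i j).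
  apply: eq_bigr => i _; apply: eq_bigr => j _; rewrite mxE mulr_suml.
  by apply: eq_bigr => l _.
transitivity (\sum_(l < k) \sum_(j < q) \sum_(i < p) A i l * C l j * B i j).
  under eq_bigr => i _ do rewrite exchange_big.
  rewrite exchange_big; apply: eq_bigr => l _; exact: exchange_big.
apply: eq_bigr => l _; apply: eq_bigr => j _; rewrite mxE mulr_sumr.
by apply: eq_bigr => i _; rewrite !mxE; ring.
Qed.

Lemma n2_ge0 p q (A : 'M[R]_(p,q)) : 0 <= frob2 A.
Proof.
by apply: sumr_ge0 => i _; apply: sumr_ge0 => j _; rewrite -expr2 sqr_ge0.
Qed.

Lemma ip_cs p q (A B : 'M[R]_(p,q)) :
  frob_inner A B ^+ 2 <= frob2 A * frob2 B.
Proof.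
rewrite /frob2 /frob_inner !pair_bigA /=.
have := @cs_sum _ (fun x : 'I_p * 'I_q => A x.1 x.2) (fun x => B x.1 x.2).
by rewrite /= !(eq_bigr _ (fun x _ => expr2 _)).
Qed.

Lemma n2_mul p k q (A : 'M[R]_(p,k)) (B : 'M[R]_(k,q)) :
  frob2 (A *m B) <= frob2 A * frob2 B.
Proof.
rewrite /frob2 /frob_inner.
apply: (@le_trans _ _ (\sum_(i < p) \sum_(j < q)
   (\sum_(l < k) A i l ^+ 2) * (\sum_(l < k) B l j ^+ 2))).
  apply: ler_sum => i _; apply: ler_sum => j _; rewrite -expr2 mxE.
  exact: (@cs_sum _ (fun l => A i l) (fun l => B l j)).
rewrite mulr_suml; apply: ler_sum => i _.
rewrite [X in _ <= _ * X]exchange_big mulr_sumr; apply: ler_sum => j _.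
by rewrite !(eq_bigr _ (fun x _ => expr2 _)).
Qed.

Lemma n2_tr p q (A : 'M[R]_(p,q)) : frob2 A^T = frob2 A.
Proof. exact: ip_tr. Qed.

Lemma n2Z p q (k : R) (A : 'M[R]_(p,q)) : frob2 (k *: A) = k ^+ 2 * frob2 A.
Proof. by rewrite /frob2 ipZl ipZr mulrA expr2. Qed.

Lemma n2_expand p q (A B : 'M[R]_(p,q)) (t : R) :
  frob2 (A + t *: B) = frob2 A + 2 * t * frob_inner A B + t ^+ 2 * frob2 B.
Proof.
rewrite /frob2 !(ipDl, ipDr, ipZl, ipZr) [frob_inner B A]ipC; ring.
Qed.

Lemma n2D_le p q (A B : 'M[R]_(p,q)) :
  frob2 (A + B) <= 2 * frob2 A + 2 * frob2 B.
Proof.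
have := n2_ge0 (A - B).
rewrite /frob2 !(ipDl, ipDr, ipNl, ipNr) [frob_inner B A]ipC => h.
lra.
Qed.

Lemma vnorm2Z q (a : R) (x : 'cV[R]_q) : vnorm2 (a *: x) = `|a| * vnorm2 x.
Proof. by rewrite /vnorm2 n2Z sqrtrM ?sqr_ge0 // sqrtr_sqr. Qed.

Lemma ip_le p q (A B : 'M[R]_(p,q)) :
  frob_inner A B <= Num.sqrt (frob2 A) * Num.sqrt (frob2 B).
Proof.
rewrite -sqrtrM ?n2_ge0 //; apply: le_trans (ler_norm _) _.
by rewrite -sqrtr_sqr ler_wsqrtr // ip_cs.
Qed.

Lemma spec_bound p q (A : 'M[R]_(p,q)) (x : 'cV[R]_q) :
  vnorm2 (A *m x) <= specnorm A * vnorm2 x.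
Proof.
have ub : has_ubound [set vnorm2 (A *m x) | x in [set x : 'cV[R]_q | vnorm2 x <= 1]].
  exists (Num.sqrt (frob2 A)) => _ [y /= hy <-].
  rewrite /vnorm2 -[X in _ <= X]mulr1 -sqrtr1 -sqrtrM ?n2_ge0 //.
  apply: ler_wsqrtr; apply: le_trans (n2_mul _ _) _.
  apply: ler_wpM2l; first exact: n2_ge0.
  rewrite -(sqr_sqrtr (n2_ge0 y)); apply: exprn_ile1 => //; exact: sqrtr_ge0.
have [x0|xn0] := eqVneq (vnorm2 x) 0.
  have hx : frob2 x = 0.
    apply/eqP; rewrite eq_le n2_ge0 andbT -sqrtr_eq0; exact/eqP.
  rewrite x0 mulr0 /vnorm2.
  suff -> : frob2 (A *m x) = 0 by rewrite sqrtr0.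
  apply/eqP; rewrite eq_le n2_ge0 andbT.
  by apply: le_trans (n2_mul _ _) _; rewrite hx mulr0.
have kp : 0 < vnorm2 x by rewrite lt_def xn0 sqrtr_ge0.
set k := vnorm2 x in xn0 kp *.
have ki : 0 <= k^-1 by rewrite invr_ge0 ltW.
have := ub_le_sup ub; set s := sup _; move=> /(_ (vnorm2 (A *m (k^-1 *: x)))) h.
have : vnorm2 (A *m (k^-1 *: x)) <= s.
  apply: h; exists (k^-1 *: x) => //=.
  by rewrite vnorm2Z (ger0_norm ki) -/k mulVf.
move=> h2.
have e : vnorm2 (A *m (k^-1 *: x)) = k^-1 * vnorm2 (A *m x).
  by rewrite -scalemxAr vnorm2Z (ger0_norm ki).
have h3 : k^-1 * vnorm2 (A *m x) <= s by rewrite -e.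
move: h3; rewrite mulrC -ler_pdivlMr ?invr_gt0 // invrK; exact.
Qed.

Lemma col_mulmx p k q (A : 'M[R]_(p,k)) (B : 'M[R]_(k,q)) j :
  col j (A *m B) = A *m col j B.
Proof.
by apply/matrixP => i l; rewrite !mxE; apply: eq_bigr => u _; rewrite !mxE.
Qed.

Lemma n2_col p q (M : 'M[R]_(p,q)) : frob2 M = \sum_(j < q) frob2 (col j M).
Proof.
rewrite /frob2 /frob_inner exchange_big; apply: eq_bigr => j _.
by apply: eq_bigr => i _; rewrite big_ord1 !mxE.
Qed.

Lemma n2_mulA p k q (A : 'M[R]_(p,k)) (B : 'M[R]_(k,q)) :
  frob2 (A *m B) <= specnorm (A^T *m A) * frob2 B.
Proof.
rewrite n2_col [frob2 B]n2_col mulr_sumr; apply: ler_sum => j _.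
rewrite col_mulmx; set c := col j B.
rewrite /frob2 ip_mull mulmxA; apply: le_trans (ip_le _ _) _.
have := spec_bound (A^T *m A) c; rewrite /vnorm2 => h.
apply: le_trans (ler_wpM2l (sqrtr_ge0 _) h) _.
by rewrite mulrCA -expr2 sqr_sqrtr // n2_ge0.
Qed.

Lemma D_poly p q (f : 'M[R]_(p,q) -> R) (y h : 'M[R]_(p,q)) (a0 a1 a2 a3 a4 : R) :
  (forall t, f (y + t *: h) = a0 + a1 * t + a2 * t ^+ 2 + a3 * t ^+ 3 + a4 * t ^+ 4) ->
  'D_h f y = a1.
Proof.
move=> Hf.
have fy : f y = a0.
  by have := Hf 0; rewrite scale0r addr0 => ->; ring.
pose P : {poly R} := a1%:P + 'X * (a2%:P + 'X * (a3%:P + 'X * a4%:P)).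
have HP : forall t, P.[t] = a1 + t * (a2 + t * (a3 + t * a4)).
  by move=> t; rewrite /P !(hornerD, hornerM, hornerC, hornerX).
rewrite /derive; apply: cvg_lim; first exact: norm_hausdorff.
have hc : horner P @ (0 : R)^' --> P.[0].
  by apply/continuous_withinNx; exact: continuous_horner.
rewrite HP mul0r addr0 in hc.
set Q := (fun h0 : R => _).
have E : {near (0:R)^', horner P =1 Q}.
  apply: filterS (nbhs_dnbhs_neq 0) => t tn0 /=.
  rewrite /Q /= HP fy [t *: h + y]addrC Hf -[t^-1 *: _]/(t^-1 * _); field; exact: tn0.
exact: cvg_trans (near_eq_cvg E) hc.
Qed.

Section Diff.
Variables (p q : nat) (y : 'M[R]_(p,q)).
Local Notation V := 'M[R]_(p,q).

Lemma dsum n (F : 'I_n -> V -> R) :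
  (forall l : 'I_n, differentiable (F l) y) -> differentiable (fun x => \sum_(k < n) F k x) y.
Proof. by move=> h; rewrite -fct_sumE; exact: differentiable_sum. Qed.

Lemma dadd (f g : V -> R) : differentiable f y -> differentiable g y ->
  differentiable (fun x => f x + g x) y.
Proof. move=> hf hg; exact: differentiableD. Qed.

Lemma dmul (f g : V -> R) : differentiable f y -> differentiable g y ->
  differentiable (fun x => f x * g x) y.
Proof. move=> hf hg; exact: differentiableM. Qed.

Lemma dcst (c : R) : differentiable (fun _ : V => c) y.
Proof. exact: differentiable_cst. Qed.

Lemma dopp (f : V -> R) : differentiable f y -> differentiable (fun x => - f x) y.
Proof. move=> hf; exact: differentiableN. Qed.

Definition cdiff a b (F : V -> 'M[R]_(a,b)) := forall i j, differentiable (fun x => F x i j) y.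

Lemma cdiff_id : cdiff id.
Proof. move=> i j; exact: differentiable_coord. Qed.

Lemma cdiff_cst a b (M : 'M[R]_(a,b)) : cdiff (fun _ => M).
Proof. move=> i j; exact: dcst. Qed.

Lemma cdiffD a b (F G : V -> 'M[R]_(a,b)) : cdiff F -> cdiff G -> cdiff (fun x => F x + G x).
Proof.
move=> hF hG i j; rewrite (_ : (fun x => _) = (fun x => F x i j + G x i j)).
  exact: dadd.
by apply/funext => x; rewrite mxE.
Qed.

Lemma cdiffN a b (F : V -> 'M[R]_(a,b)) : cdiff F -> cdiff (fun x => - F x).
Proof.
move=> hF i j; rewrite (_ : (fun x => _) = (fun x => - F x i j)).
  exact: dopp.
by apply/funext => x; rewrite mxE.
Qed.

Lemma cdiffB a b (F G : V -> 'M[R]_(a,b)) : cdiff F -> cdiff G -> cdiff (fun x => F x - G x).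
Proof. by move=> hF hG; apply: cdiffD => //; apply: cdiffN. Qed.

Lemma cdiff_tr a b (F : V -> 'M[R]_(a,b)) : cdiff F -> cdiff (fun x => (F x)^T).
Proof.
move=> hF i j; rewrite (_ : (fun x => _) = (fun x => F x j i)); first exact: hF.
by apply/funext => x; rewrite mxE.
Qed.

Lemma cdiff_mul a b c (F : V -> 'M[R]_(a,b)) (G : V -> 'M[R]_(b,c)) :
  cdiff F -> cdiff G -> cdiff (fun x => F x *m G x).
Proof.
move=> hF hG i j; rewrite (_ : (fun x => _) = (fun x => \sum_(l < b) F x i l * G x l j)).
  by apply: dsum => l; apply: dmul.
by apply/funext => x; rewrite mxE.
Qed.

Lemma diff_ip a b (F G : V -> 'M[R]_(a,b)) : cdiff F -> cdiff G ->
  differentiable (fun x => frob_inner (F x) (G x)) y.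
Proof.
move=> hF hG; rewrite /frob_inner; apply: dsum => i; apply: dsum => j.
exact: dmul.
Qed.
End Diff.

Lemma addE a b (A B : 'M[R]_(a,b)) i j : (A + B) i j = A i j + B i j.
Proof. by rewrite mxE. Qed.
Lemma oppE a b (A : 'M[R]_(a,b)) i j : (- A) i j = - A i j.
Proof. by rewrite mxE. Qed.
Lemma scaleE a b (c : R) (A : 'M[R]_(a,b)) i j : (c *: A) i j = c * A i j.
Proof. by rewrite mxE. Qed.

Lemma n2N a b (A : 'M[R]_(a,b)) : frob2 (- A) = frob2 A.
Proof. by rewrite /frob2 ipNl ipNr opprK. Qed.

Lemma n2_expand3 a b (A B C : 'M[R]_(a,b)) (t : R) :
  frob2 (A + t *: B + t ^+ 2 *: C) = frob2 A + 2 * t * frob_inner A B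
    + t ^+ 2 * (frob2 B + 2 * frob_inner A C) + 2 * t ^+ 3 * frob_inner B C
    + t ^+ 4 * frob2 C.
Proof.
rewrite /frob2 !(ipDl, ipDr, ipZl, ipZr) [frob_inner B A]ipC [frob_inner C A]ipC
  [frob_inner C B]ipC; ring.
Qed.

Lemma ip_1 a b (A : 'M[R]_(a,b)) : frob_inner 1%:M (A *m A^T) = frob2 A.
Proof. by rewrite ipC ip_mull mulmx1 /frob2 ip_tr. Qed.

Lemma ip_WH a b (W H : 'M[R]_(a,b)) :
  frob_inner (W *m W^T) (H *m H^T) = frob2 (W^T *m H).
Proof.
rewrite ip_mull -ip_tr trmxK !trmx_mul trmxK -mulmxA ipC ip_mull trmxK.
rewrite (_ : H^T *m W = (W^T *m H)^T); last by rewrite trmx_mul trmxK.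
by rewrite /frob2 ip_tr.
Qed.

Lemma M1 a b c (X : 'M[R]_(a,c)) (U : 'M[R]_(a,b)) (W H : 'M[R]_(b,c)) (t : R) :
  X - U *m (W + t *: H) = (X - U *m W) + t *: (- (U *m H)).
Proof.
rewrite mulmxDr -scalemxAr; apply/matrixP => i j.
rewrite !(addE, oppE, scaleE); ring.
Qed.

Lemma M4 a b c (X : 'M[R]_(a,c)) (V : 'M[R]_(b,c)) (W H : 'M[R]_(a,b)) (t : R) :
  X - (W + t *: H) *m V = (X - W *m V) + t *: (- (H *m V)).
Proof.
rewrite mulmxDl -scalemxAl; apply/matrixP => i j.
rewrite !(addE, oppE, scaleE); ring.
Qed.

Lemma M2 a b (W H : 'M[R]_(a,b)) (t : R) :
  1%:M - (W + t *: H) *m (W + t *: H)^T = (1%:M - W *m W^T)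
    + t *: (- (H *m W^T + W *m H^T)) + t ^+ 2 *: (- (H *m H^T)).
Proof.
rewrite linearD linearZ /= mulmxDl !mulmxDr -!scalemxAl -!scalemxAr.
apply/matrixP => i j; rewrite !(addE, oppE, scaleE); ring.
Qed.

Lemma M3 a b (W H : 'M[R]_(a,b)) :
  H *m (W + 2^-1 *: H)^T + (W + 2^-1 *: H) *m H^T
   = (H *m W^T + W *m H^T) + H *m H^T.
Proof.
rewrite linearD linearZ /= mulmxDl !mulmxDr -!scalemxAl -!scalemxAr.
apply/matrixP => i j; rewrite !(addE, oppE, scaleE); by field.
Qed.

Lemma breg_poly p q (f : 'M[R]_(p,q) -> R) (x y : 'M[R]_(p,q)) (a0 a1 a2 a3 a4 : R) :
  differentiable f y ->
  (forall t, f (y + t *: (x - y)) = a0 + a1 * t + a2 * t ^+ 2 + a3 * t ^+ 3 + a4 * t ^+ 4) ->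
  bregman f x y = a2 + a3 + a4.
Proof.
move=> df H; rewrite /bregman -deriveE // (D_poly H).
have h1 := H 1; have h0 := H 0.
rewrite scale1r [y + _]addrC subrK in h1; rewrite scale0r addr0 in h0.
rewrite h1 h0; ring.
Qed.

Lemma dsq p q (y : 'M[R]_(p,q)) (f : 'M[R]_(p,q) -> R) :
  differentiable f y -> differentiable (fun x => f x ^+ 2) y.
Proof.
move=> hf; rewrite (_ : (fun x => _) = (fun x => f x * f x)); first exact: dmul.
by apply/funext => x; rewrite expr2.
Qed.

Lemma bregF1 m n r (lam : R) (X : 'M[R]_(m,n)) (V : 'M[R]_(r,n)) (x y : 'M[R]_(m,r)) :
  bregman (fun U => fobj lam X U V) x y = 2^-1 * frob2 ((x - y) *m V).
Proof.
rewrite (@breg_poly _ _ _ x y (2^-1 * frob2 (X - y *m V) + lam / 2 * frob2 (1%:M - V *m V^T))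
  (frob_inner (X - y *m V) (- ((x - y) *m V))) (2^-1 * frob2 ((x - y) *m V)) 0 0).
- ring.
- rewrite /fobj /frob2; apply: dadd; last exact: dcst.
  apply: dmul; first exact: dcst.
  apply: diff_ip; apply: cdiffB; (try exact: cdiff_cst);
    apply: cdiff_mul; (try exact: cdiff_cst); exact: cdiff_id.
- by move=> t; rewrite /fobj M4 n2_expand n2N; field.
Qed.

Lemma bregP1 m n r (V : 'M[R]_(r,n)) (x y : 'M[R]_(m,r)) :
  bregman (fun U => phi1 U V) x y = 2^-1 * frob2 (x - y).
Proof.
rewrite (@breg_poly _ _ _ x y (2^-1 * frob2 y) (frob_inner y (x - y))
  (2^-1 * frob2 (x - y)) 0 0).
- ring.
- rewrite /phi1 /frob2; apply: dmul; first exact: dcst.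
  apply: diff_ip; exact: cdiff_id.
- by move=> t; rewrite /phi1 n2_expand; field.
Qed.

Lemma bregF2 m n r (lam : R) (X : 'M[R]_(m,n)) (U : 'M[R]_(m,r)) (x y : 'M[R]_(r,n)) :
  let H := x - y in
  let P := 1%:M - y *m y^T in
  let S := H *m y^T + y *m H^T in
  let Q := H *m H^T in
  bregman (fun V => fobj lam X U V) x y = 2^-1 * frob2 (U *m H) +
    lam / 2 * (frob2 S + 2 * frob_inner P (- Q) + 2 * frob_inner S Q + frob2 Q).
Proof.
move=> H P S Q.
rewrite (@breg_poly _ _ _ x y (2^-1 * frob2 (X - U *m y) + lam / 2 * frob2 P)
  (frob_inner (X - U *m y) (- (U *m H)) + lam / 2 * (2 * frob_inner P (- S)))
  (2^-1 * frob2 (U *m H) + lam / 2 * (frob2 S + 2 * frob_inner P (- Q)))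
  (lam / 2 * (2 * frob_inner S Q)) (lam / 2 * frob2 Q)).
- ring.
- rewrite /fobj /frob2; apply: dadd; (apply: dmul; first exact: dcst);
  apply: diff_ip; apply: cdiffB; (try exact: cdiff_cst);
    apply: cdiff_mul; (try exact: cdiff_cst); (try exact: cdiff_id);
    apply: cdiff_tr; exact: cdiff_id.
- move=> t; rewrite /fobj M1 M2 n2_expand n2_expand3 -/P -/S -/Q -/H.
  rewrite !n2N [frob_inner (- S) (- Q)]ipNl [frob_inner S (- Q)]ipNr opprK; by field.
Qed.

Lemma bregP2 m n r (lam : R) (U : 'M[R]_(m,r)) (x y : 'M[R]_(r,n)) :
  let al := frob2 y in let b := frob_inner y (x - y) in let g := frob2 (x - y) in
  bregman (fun V => phi2 lam U V) x y =
    6 * lam / 4 * (4 * b ^+ 2 + 2 * al * g + 4 * b * g + g ^+ 2) + 2^-1 * eps_of lam U * g.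
Proof.
move=> al b g.
rewrite (@breg_poly _ _ _ x y (6 * lam / 4 * al ^+ 2 + 2^-1 * eps_of lam U * al)
  (6 * lam / 4 * (4 * al * b) + 2^-1 * eps_of lam U * (2 * b))
  (6 * lam / 4 * (4 * b ^+ 2 + 2 * al * g) + 2^-1 * eps_of lam U * g)
  (6 * lam / 4 * (4 * b * g)) (6 * lam / 4 * g ^+ 2)).
- ring.
- rewrite /phi2 /frob2; apply: dadd; apply: dmul; try exact: dcst.
  + apply: dsq; apply: diff_ip; exact: cdiff_id.
  + apply: diff_ip; exact: cdiff_id.
- by move=> t; rewrite /phi2 n2_expand -/al -/b -/g; field.
Qed.

Lemma fin_ineq (lam e al b g u sq w Df Dp : R) : 0 < lam -> 2*lam <= e -> 0 <= g -> 0 <= al ->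
 0 <= u -> u <= e*g -> 0 <= sq -> sq <= 4*(al + b + g/4)*g -> 0 <= w -> w <= al*g ->
 Df = 2^-1 * u + lam/2 * (sq + 2*(w - g)) ->
 Dp = 6*lam/4*(4*b^+2 + 2*al*g + 4*b*g + g^+2) + 2^-1*e*g ->
 - 1 * Dp <= Df <= 1 * Dp.
Proof.
move=> l0 le g0 a0 u0 ue s0 sle w0 wle -> ->.
have A1 := mulr_ge0 (ltW l0) s0.
have A2 : lam * sq <= lam * (4*(al + b + g/4)*g) by rewrite ler_wpM2l // ltW.
have A3 := mulr_ge0 (ltW l0) w0.
have A4 : lam * w <= lam * (al * g) by rewrite ler_wpM2l // ltW.
have A6 : 2 * lam * g <= e * g by rewrite ler_wpM2r.
have A7 : 0 <= lam * ((2*b+g)^+2 + 2*al*g) by apply: mulr_ge0; [exact: ltW | apply: addr_ge0; [exact: sqr_ge0| apply: mulr_ge0 => //; apply: mulr_ge0]].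
have A8 : 0 <= lam * (2*b^+2 + (2*b+g)^+2) by apply: mulr_ge0; [exact: ltW | apply: addr_ge0; [apply: mulr_ge0 => //; exact: sqr_ge0 | exact: sqr_ge0]].
have A9 := mulr_ge0 (ltW l0) g0.
apply/andP; split; nra.
Qed.

Lemma spec1 m n r (H : 'M[R]_(m,r)) (V : 'M[R]_(r,n)) :
  frob2 (H *m V) <= specnorm (V *m V^T) * frob2 H.
Proof.
rewrite -n2_tr trmx_mul; have := n2_mulA V^T H^T.
by rewrite trmxK n2_tr.
Qed.

End S.

Theorem proposition5p1 (R : realType) (m n r : nat) (lam : R) (X : 'M[R]_(m, n)) :
  0 < lam ->
  (forall V : 'M[R]_(r, n),
     rel_smooth (fun U => fobj lam X U V) (fun U => phi1 U V)
       (specnorm (V *m V^T)) 0) /\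
  (forall U : 'M[R]_(m, r),
     rel_smooth (fun V => fobj lam X U V) (fun V => phi2 lam U V) 1 1).
Proof.
move=> lam0; split.
- move=> V x y.
  change (- 0 * bregman (fun U => phi1 U V) x y <= bregman (fun U => fobj lam X U V) x y
     <= specnorm (V *m V^T) * bregman (fun U => phi1 U V) x y).
  rewrite bregF1 bregP1 oppr0 mul0r.
  apply/andP; split; first by apply: mulr_ge0; [rewrite invr_ge0 ler0n | exact: n2_ge0].
  rewrite mulrCA; apply: ler_wpM2l; first by rewrite invr_ge0 ler0n.
  exact: spec1.
- move=> U x y.
  change (- 1 * bregman (fun V => phi2 lam U V) x y <= bregman (fun V => fobj lam X U V) x y
     <= 1 * bregman (fun V => phi2 lam U V) x y).
  rewrite bregF2 bregP2.
  have se : specnorm (U^T *m U) <= eps_of lam U by rewrite /eps_of le_max lexx.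
  have le : 2 * lam <= eps_of lam U by rewrite /eps_of le_max lexx orbT.
  set M := y + 2^-1 *: (x - y).
  apply: (@fin_ineq _ lam (eps_of lam U) (frob2 y) (frob_inner y (x - y)) (frob2 (x - y))
    (frob2 (U *m (x - y))) (frob2 (((x - y) *m y^T + y *m (x - y)^T) + (x - y) *m (x - y)^T))
    (frob2 (y^T *m (x - y)))).
  + exact: lam0.
  + exact: le.
  + exact: n2_ge0.
  + exact: n2_ge0.
  + exact: n2_ge0.
  + apply: le_trans (n2_mulA _ _) _; apply: ler_wpM2r => //; exact: n2_ge0.
  + exact: n2_ge0.
  + rewrite -M3 -/M.
    have hM := n2_expand y (x - y) 2^-1; rewrite -/M in hM.
    have h1 : frob2 ((x - y) *m M^T) <= frob2 (x - y) * frob2 M.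
      by have := n2_mul (x - y) M^T; rewrite n2_tr.
    have h2 : frob2 (M *m (x - y)^T) <= frob2 M * frob2 (x - y).
      by have := n2_mul M (x - y)^T; rewrite n2_tr.
    apply: le_trans (n2D_le _ _) _.
    rewrite hM in h1 h2 *.
    have g0 := n2_ge0 (x - y).
    nra.
  + exact: n2_ge0.
  + by have := n2_mul y^T (x - y); rewrite n2_tr.
  + set H := x - y.
    have eSQ : frob2 (H *m y^T + y *m H^T) + 2 * frob_inner (H *m y^T + y *m H^T) (H *m H^T)
       + frob2 (H *m H^T) = frob2 ((H *m y^T + y *m H^T) + H *m H^T).
      by have := n2_expand (H *m y^T + y *m H^T) (H *m H^T) 1; rewrite scale1r => ->; ring.
    have eP : frob_inner (1%:M - y *m y^T) (- (H *m H^T)) = frob2 (y^T *m H) - frob2 H.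
      by rewrite ipNr ipBl ip_1 ip_WH; ring.
    rewrite eP -eSQ; ring.
  + by [].
Qed.
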